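(* Let $R$ be a principal Artinian ring and let $f, g \in R[x]$ be nilpotent polynomials, not both zero. Let $d$ be a generator of the ideal $(c(f), c(g))$ and let $\tilde f, \tilde g \in R[x]$ satisfy $f = d\tilde f$ and $g = d\tilde g$. Then $$\mathrm{Rres}_R(f,g) = \{\, d s : s\in R,\ (s \bmod \mathrm{Ann}(d)) \in \mathrm{Rres}_{R/\mathrm{Ann}(d)}(\bar{\tilde f}, \bar{\tilde g})\,\}$$ (i.e. $\mathrm{rres}(f,g) = d\cdot\mathrm{rres}_{R/\mathrm{Ann}(d)}(\tilde f,\tilde g)$), and at least one of $\tilde f$, $\tilde g$ is not nilpotent.
   Context: A principal Artinian ring is a commutative ring with identity in which every ideal is principal and which satisfies the descending chain condition on ideals. For $f=\sum a_ix^i$, the content ideal is $C(f)=(a_0,\dots,a_d)$ and $c(f)$ is any generator of it. $\mathrm{Ann}(d)=\{s\in R: sd=0\}$; bars denote images in $(R/\mathrm{Ann}(d))[x]$. For a commutative ring $S$ and $f,g\in S[x]$, $\mathrm{Rres}_S(f,g)=(f,g)\cap S$ with $(f,g)$ the ideal of $S[x]$ generated by $f,g$. *)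

(* Defs.v *)
From HB Require Import structures.
From mathcomp Require Import all_boot all_algebra.
Set Implicit Arguments. Unset Strict Implicit. Unset Printing Implicit Defensive.
Import GRing.Theory.
Local Open Scope ring_scope.

Definition is_ideal (R : comNzRingType) (I : R -> Prop) : Prop :=
  [/\ I 0, (forall x y, I x -> I y -> I (x + y)) & (forall r x, I x -> I (r * x))].

Definition principal_ideal (R : comNzRingType) (a : R) : R -> Prop :=
  fun x => exists r, x = r * a.

Definition principal_ring (R : comNzRingType) : Prop :=
  forall I : R -> Prop, is_ideal I ->
    exists a, forall x, I x <-> principal_ideal a x.

Definition artinian (R : comNzRingType) : Prop :=
  forall I : nat -> R -> Prop, (forall n, is_ideal (I n)) ->
    (forall n x, I n.+1 x -> I n x) ->
    exists N, forall n, (N <= n)%N -> forall x, I n x <-> I N x.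

Definition principal_artinian (R : comNzRingType) : Prop :=
  principal_ring R /\ artinian R.

Definition ideal_gen (R : comNzRingType) (s : seq R) : R -> Prop :=
  fun x => exists r : 'I_(size s) -> R, x = \sum_(i < size s) r i * s`_i.

(* d generates the ideal (c(f), c(g)) = C(f) + C(g), generated by all the
   coefficients of f and of g. *)
Definition generates_content (R : comNzRingType) (d : R) (f g : {poly R}) : Prop :=
  forall x, ideal_gen ((f : seq R) ++ (g : seq R)) x <-> principal_ideal d x.

Definition nilpotent_poly (R : comNzRingType) (p : {poly R}) : Prop :=
  exists n : nat, p ^+ n = 0.

Definition Ann (R : comNzRingType) (d : R) : R -> Prop := fun s => s * d = 0.

(* Rres_R(f, g) = (f, g) ∩ R, the constants of the ideal (f,g) of R[x]. *)
Definition Rres (R : comNzRingType) (f g : {poly R}) : R -> Prop :=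
  fun r => exists u v : {poly R}, u * f + v * g = r%:P.

(* Membership of the class (s mod I) in Rres_{R/I}(fbar, gbar), for an ideal I
   of R, written out via lifts of the quotient polynomials: there are
   U, V in (R/I)[x] with U fbar + V gbar = (s mod I), i.e. lifts u, v in R[x]
   such that every coefficient of u f + v g - s lies in I. *)
Definition Rres_mod (R : comNzRingType) (I : R -> Prop) (f g : {poly R}) : R -> Prop :=
  fun s => exists u v : {poly R},
    forall i : nat, I (u * f + v * g - s%:P)`_i.

(* Main.v *)
Require Import Defs.
From HB Require Import structures.
From mathcomp Require Import all_boot all_algebra.
From mathcomp Require Import zify.
From Stdlib Require Import Classical_Prop.
Import GRing.Theory.
Local Open Scope ring_scope.

Definition nilE {S : comNzRingType} (x : S) := exists n : nat, x ^+ n = 0.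

Lemma nil_add {S : comNzRingType} (a b : S) : nilE a -> nilE b -> nilE (a + b).
Proof.
move=> [m Ha] [n Hb]; exists (m + n)%N; rewrite exprDn; apply: big1 => i _.
case: (leqP m (m + n - i)) => H.
  by rewrite -(subnKC H) exprD Ha mul0r !mul0r mul0rn.
have Hi : (n <= i)%N by have := ltn_ord i; lia.
by rewrite -(subnKC Hi) exprD Hb mul0r mulr0 mul0rn.
Qed.

Lemma nil_mul {S : comNzRingType} (a b : S) : nilE b -> nilE (a * b).
Proof. by move=> [n Hb]; exists n; rewrite exprMn Hb mulr0. Qed.

Lemma coef_nil {S : comNzRingType} (k : nat) : forall p : {poly S},
  nilE p -> nilE p`_k.
Proof.
elim: k => [|k IH] p [n Hp].
  by exists n; rewrite -horner_coef0 -horner_exp Hp horner0.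
set q := drop_poly 1 p.
have Eq : p - (p`_0)%:P = q * 'X.
  apply/polyP => i; rewrite coefB coefC coefMX.
  case: i => [|i] /=; first by rewrite subrr.
  by rewrite subr0 /q coef_drop_poly addn1.
have Hq : nilE q.
  have : nilE (q * 'X).
    rewrite -Eq; apply: nil_add; first by exists n.
    have [m Hm] : nilE p`_0 by exists n; rewrite -horner_coef0 -horner_exp Hp horner0.
    by exists m; rewrite -polyCN -polyC_exp exprNn Hm mulr0 polyC0.
  move=> [m Hm]; exists m; apply/polyP => i.
  move/(congr1 (fun r : {poly S} => r`_(i + m))): Hm.
  by rewrite exprMn coefMXn ltnNge leq_addl /= addnK !coef0 => ->.
have := IH q Hq. by rewrite /q coef_drop_poly addn1.
Qed.

Theorem lemma5p4 (R : comNzRingType) (f g : {poly R}) (d : R) (ft gt : {poly R}) :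
  principal_artinian R ->
  nilpotent_poly f -> nilpotent_poly g ->
  ~ (f = 0 /\ g = 0) ->
  generates_content d f g ->
  f = d *: ft -> g = d *: gt ->
  (forall r : R, Rres f g r <->
     exists s : R, r = d * s /\ Rres_mod (Ann d) ft gt s)
  /\ (~ nilpotent_poly ft \/ ~ nilpotent_poly gt).
Proof.
move=> _ _ _ Hnz Hgen Ef Eg; split.
  move=> r; split.
    move=> [u [v Huv]].
    set h := u * ft + v * gt.
    have Hh : d *: h = r%:P by rewrite /h scalerDr !scalerAr -Ef -Eg.
    exists h`_0; split.
      by move/(congr1 (fun p : {poly R} => p`_0)): Hh; rewrite coefZ coefC /=.
    exists u, v => i; rewrite /Ann coefB coefC.
    case: i => [|i] /=; first by rewrite subrr mul0r.
    rewrite subr0 mulrC.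
    by move/(congr1 (fun p : {poly R} => p`_i.+1)): Hh; rewrite coefZ coefC.
  move=> [s [-> [u [v Huv]]]]; exists u, v.
  rewrite Ef Eg -!scalerAr -scalerDr.
  apply/polyP => i; rewrite coefZ coefC.
  have := Huv i; rewrite /Ann coefB coefC mulrC => /eqP.
  rewrite mulrBr subr_eq0 => /eqP ->.
  by case: (i == 0%N); rewrite ?mulr0.
apply/Classical_Prop.not_and_or => [[[m Hft] [n Hgt]]].
have Nft : forall k, nilE ft`_k by move=> k; apply: coef_nil; exists m.
have Ngt : forall k, nilE gt`_k by move=> k; apply: coef_nil; exists n.
have [r Hr] : ideal_gen ((f : seq R) ++ (g : seq R)) d.
  by apply/Hgen; exists 1; rewrite mul1r.
set N := \sum_(i < size ((f : seq R) ++ (g : seq R)))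
   r i * (if (i < size f)%N then ft`_i else gt`_(i - size f)).
have HN : nilE N.
  apply: (big_ind (fun x : R => nilE x)).
  - by exists 1%N; rewrite expr1.
  - by move=> x y; apply: nil_add.
  move=> i _; apply: nil_mul. by case: ifP.
have HdN : d = d * N.
  rewrite {1}Hr /N mulr_sumr; apply: eq_bigr => i _.
  have cf : forall j, f`_j = d * ft`_j by move=> j; rewrite Ef coefZ.
  have cg : forall j, g`_j = d * gt`_j by move=> j; rewrite Eg coefZ.
  by rewrite nth_cat; case: ifP => _; rewrite ?cf ?cg mulrCA.
have Hk : forall k, d = d * N ^+ k.
  elim => [|k IHk]; first by rewrite expr0 mulr1.
  by rewrite exprS mulrA -HdN.
have Hd : d = 0 by case: HN => k Hk0; rewrite (Hk k) Hk0 mulr0.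
by apply: Hnz; rewrite Ef Eg Hd !scale0r.
Qed.
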